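(* Let $(\mathcal{F},\mathcal{F}_d,R)$ be a complementary justification frame, $x\in\mathcal{F}_d$, and let $\mathbb{B}$ be a branch selection for $x$. Then there exists a rule $\sim x\gets B_{\sim x}$ in $R$ such that for each $y\in\sim B_{\sim x}$, the set $\mathbb{B}_y:=\{y\to b\mid x\to y\to b\in\mathbb{B}\}$ is a branch selection for $y$.
   Context: A fact space is a set $\mathcal{F}$ containing $\mathcal{L}=\{\mathbf{t},\mathbf{f},\mathbf{u}\}$, equipped with an involution $\sim$ with $\sim\mathbf{t}=\mathbf{f}$, $\sim\mathbf{u}=\mathbf{u}$, $\sim x\ne x$ for $x\ne\mathbf{u}$; $\sim A=\{\sim a:a\in A\}$. A justification frame is $(\mathcal{F},\mathcal{F}_d,R)$ with defined facts $\mathcal{F}_d\subseteq\mathcal{F}$, $\sim\mathcal{F}_d=\mathcal{F}_d$, $\mathcal{L}\cap\mathcal{F}_d=\emptyset$, and rules $R\subseteq\mathcal{F}_d\times2^{\mathcal{F}}$ written $x\gets A$, such that each $x\in\mathcal{F}_d$ has a rule with nonempty body and no rule with empty body; open facts $\mathcal{F}_o=\mathcal{F}\setminus\mathcal{F}_d$. Let $R(x)$ be the set of bodies of rules with head $x$. A selection function for $x$ is a map $S:R(x)\to\mathcal{F}$ with $S(A)\in A$; $\mathrm{im}(S)$ is its image. The frame is complementary if for every $x\in\mathcal{F}_d$: (1) for every selection function $S$ for $x$ there is $A\in R(\sim x)$ with $A\subseteq\sim\mathrm{im}(S)$; (2) for every $A\in R(x)$ there is a selection function $S$ for $\sim x$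 with $\sim\mathrm{im}(S)\subseteq A$. A (tree-like) justification is a directed labeled forest whose internal nodes $n$ are labeled by defined facts with $\ell(n)\gets\{\ell(m):(n,m)\text{ an edge}\}\in R$; it is locally complete if no leaf is labeled by a defined fact; rooted in $x$ if a node labeled $x$ reaches all nodes. For an open fact $y$, the only locally complete justification rooted in $y$ is the single node labeled $y$ (with single branch $y$). A branch is an infinite sequence of defined facts or a finite sequence of defined facts followed by an open fact; a $J$-branch starting in $x$ is a path in $J$ from the root labeled $x$ that is infinite or ends in a leaf. A branch selection for a fact $x$ is a set $\mathbb{B}$ of branches starting in $x$ such that for each locally complete justification $J$ rooted in $x$, $\mathbb{B}$ contains at least one $J$-branch starting in $x$. *)

(* Defs.v *)
From Stdlib Require Import List Relations.
Import ListNotations.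
Set Implicit Arguments.

Section Defs.
Variable F : Type.

(* neg is the involution ~ ; t f u are the logical facts *)
Definition is_fact_space (neg : F -> F) (t f u : F) : Prop :=
  t <> f /\ t <> u /\ f <> u /\
  (forall x, neg (neg x) = x) /\
  neg t = f /\ neg u = u /\
  (forall x, x <> u -> neg x <> x).

(* Fd : defined facts;  R x A : the rule  x <- A  belongs to R *)
Definition is_justification_frame (neg : F -> F) (t f u : F)
    (Fd : F -> Prop) (R : F -> (F -> Prop) -> Prop) : Prop :=
  is_fact_space neg t f u /\
  (forall x, Fd x <-> Fd (neg x)) /\
  ~ Fd t /\ ~ Fd f /\ ~ Fd u /\
  (forall x A, R x A -> Fd x) /\
  (forall x, Fd x -> exists A, R x A /\ exists a, A a) /\
  (forall x A, Fd x -> R x A -> exists a, A a).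

Definition selection_function (R : F -> (F -> Prop) -> Prop) (x : F)
    (S : (F -> Prop) -> F) : Prop :=
  forall A, R x A -> A (S A).

Definition sel_image (R : F -> (F -> Prop) -> Prop) (x : F)
    (S : (F -> Prop) -> F) : F -> Prop :=
  fun b => exists A, R x A /\ S A = b.

Definition neg_set (neg : F -> F) (A : F -> Prop) : F -> Prop :=
  fun b => exists a, A a /\ b = neg a.

Definition subset (A B : F -> Prop) : Prop := forall a, A a -> B a.

Definition complementary (neg : F -> F) (Fd : F -> Prop)
    (R : F -> (F -> Prop) -> Prop) : Prop :=
  forall x, Fd x ->
    (forall S, selection_function R x S ->
       exists A, R (neg x) A /\ subset A (neg_set neg (sel_image R x S))) /\
    (forall A, R x A ->
       exists S, selection_function R (neg x) S /\
                 subset (neg_set neg (sel_image R (neg x) S)) A).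

Record justification := {
  jnode : Type;
  jedge : jnode -> jnode -> Prop;
  jlab  : jnode -> F }.

Definition is_leaf (J : justification) (n : jnode J) : Prop :=
  ~ exists m, jedge J n m.

Definition is_justification (Fd : F -> Prop) (R : F -> (F -> Prop) -> Prop)
    (J : justification) : Prop :=
  (forall m n1 n2, jedge J n1 m -> jedge J n2 m -> n1 = n2) /\
  (forall n, ~ clos_trans _ (jedge J) n n) /\
  (forall n, (exists m, jedge J n m) ->
     Fd (jlab J n) /\
     R (jlab J n) (fun b => exists m, jedge J n m /\ jlab J m = b)).

Definition locally_complete (Fd : F -> Prop) (J : justification) : Prop :=
  forall n, is_leaf J n -> ~ Fd (jlab J n).

Definition is_root (J : justification) (x : F) (r : jnode J) : Prop :=
  jlab J r = x /\ forall n, clos_refl_trans _ (jedge J) r n.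

Definition rooted_in (J : justification) (x : F) : Prop :=
  exists r, is_root J x r.

(* binf s : the infinite sequence s 0, s 1, ...
   bfin l y : the finite sequence l ++ [y] *)
Inductive branch : Type :=
| binf : (nat -> F) -> branch
| bfin : list F -> F -> branch.

Definition is_branch (Fd : F -> Prop) (b : branch) : Prop :=
  match b with
  | binf s => forall k, Fd (s k)
  | bfin l y => Forall Fd l /\ ~ Fd y
  end.

Definition bhead (b : branch) : F :=
  match b with
  | binf s => s 0
  | bfin [] y => y
  | bfin (a :: _) _ => a
  end.

Definition starts_in (Fd : F -> Prop) (b : branch) (x : F) : Prop :=
  is_branch Fd b /\ bhead b = x.

Definition branch_eq (b c : branch) : Prop :=
  match b, c with
  | binf s, binf s' => forall k, s k = s' k
  | bfin l y, bfin l' y' => l = l' /\ y = y'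
  | _, _ => False
  end.

Definition bcons (x : F) (b : branch) : branch :=
  match b with
  | binf s => binf (fun k => match k with 0 => x | S k' => s k' end)
  | bfin l y => bfin (x :: l) y
  end.

Definition is_J_branch (J : justification) (x : F) (b : branch) : Prop :=
  exists r, is_root J x r /\
  match b with
  | binf s => exists p : nat -> jnode J,
      p 0 = r /\ (forall k, jedge J (p k) (p (S k))) /\
      (forall k, s k = jlab J (p k))
  | bfin l y => exists p : nat -> jnode J,
      p 0 = r /\ (forall k, k < length l -> jedge J (p k) (p (S k))) /\
      is_leaf J (p (length l)) /\
      (forall k, k < length l -> nth_error l k = Some (jlab J (p k))) /\
      y = jlab J (p (length l))
  end.

Definition branch_selection (Fd : F -> Prop) (R : F -> (F -> Prop) -> Prop)
    (x : F) (BB : branch -> Prop) : Prop :=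
  (forall b, BB b -> starts_in Fd b x) /\
  (forall J : justification,
     is_justification Fd R J -> locally_complete Fd J -> rooted_in J x ->
     exists b, BB b /\ is_J_branch J x b).

Definition sub_selection (BB : branch -> Prop) (x y : F) : branch -> Prop :=
  fun c => bhead c = y /\ exists b, BB b /\ branch_eq b (bcons x c).

End Defs.

(* Main.v *)
Require Import Defs.
From Stdlib Require Import List Relations.
From Stdlib Require Import Classical IndefiniteDescription FunctionalExtensionality PropExtensionality Eqdep Arith Lia.
Import ListNotations.
Set Implicit Arguments.

Definition cnode (F : Type) (I : Type) (Ji : I -> justification F) : Type :=
  option {i : I & jnode (Ji i)}.

Definition cedge (F : Type) (I : Type) (Ji : I -> justification F)
  (ri : forall i, jnode (Ji i)) (p q : cnode Ji) : Prop :=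
  (p = None /\ exists i, q = Some (existT _ i (ri i))) \/
  (exists i n m, p = Some (existT _ i n) /\ q = Some (existT _ i m) /\ jedge (Ji i) n m).

Definition clab (F : Type) (I : Type) (Ji : I -> justification F) (x : F)
  (p : cnode Ji) : F :=
  match p with None => x | Some (existT _ i n) => jlab (Ji i) n end.
Arguments clab {F I} Ji x p.

Definition cJ (F : Type) (I : Type) (Ji : I -> justification F) (x : F)
  (ri : forall i, jnode (Ji i)) : justification F :=
  {| jnode := cnode Ji; jedge := cedge ri; jlab := clab Ji x |}.

Lemma some_inj (F I : Type) (Ji : I -> justification F) i (a b : jnode (Ji i)) :
  @Some {i : I & jnode (Ji i)} (existT _ i a) = Some (existT _ i b) -> a = b.
Proof. intro H. injection H as H. apply inj_pair2 in H. exact H. Qed.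
Arguments some_inj {F I Ji i a b} _.

Lemma some_fst (F I : Type) (Ji : I -> justification F) i j (a : jnode (Ji i)) (b : jnode (Ji j)) :
  @Some {i : I & jnode (Ji i)} (existT _ i a) = Some (existT _ j b) -> i = j.
Proof.
  intro H. apply (f_equal (fun o => match o with Some s => projT1 s | None => i end)) in H.
  exact H.
Qed.
Arguments some_fst {F I Ji i j a b} _.

Lemma cedge_some (F I : Type) (Ji : I -> justification F) ri i n q :
  @cedge F I Ji ri (Some (existT _ i n)) q <->
  exists m, q = Some (existT _ i m) /\ jedge (Ji i) n m.
Proof.
  split.
  - intros [[H _]|[i0 [n0 [m0 [H1 [H2 H3]]]]]]; [discriminate|].
    assert (i0 = i) by (symmetry; exact (some_fst H1)).
    subst i0. apply some_inj in H1. subst. eauto.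
  - intros [m [H1 H2]]. right. exists i, n, m. auto.
Qed.

Lemma cedge_none_r (F I : Type) (Ji : I -> justification F) ri p :
  ~ @cedge F I Ji ri p None.
Proof.
  intros [[_ [i H]]|[i [n [m [_ [H _]]]]]]; discriminate.
Qed.

Lemma ctrans (F I : Type) (Ji : I -> justification F) ri p q :
  clos_trans _ (@cedge F I Ji ri) p q ->
  q <> None /\ forall i n, p = Some (existT _ i n) ->
    exists m, q = Some (existT _ i m) /\ clos_trans _ (jedge (Ji i)) n m.
Proof.
  induction 1 as [p q H|p q r H1 [IH1a IH1b] H2 [IH2a IH2b]].
  - split.
    + intro; subst; apply (cedge_none_r H).
    + intros i n ->. apply cedge_some in H. destruct H as [m [Hm1 Hm2]].
      exists m; split; auto. constructor; auto.
  - split; auto.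
    intros i n Hp. destruct (IH1b i n Hp) as [m [Hq Hnm]].
    destruct (IH2b i m Hq) as [m' [Hr Hmm]].
    exists m'; split; auto. eapply t_trans; eauto.
Qed.

Lemma crt_lift (F I : Type) (Ji : I -> justification F) ri i n m :
  clos_refl_trans _ (jedge (Ji i)) n m ->
  clos_refl_trans _ (@cedge F I Ji ri) (Some (existT _ i n)) (Some (existT _ i m)).
Proof.
  induction 1.
  - apply rt_step. apply cedge_some. eauto.
  - apply rt_refl.
  - eapply rt_trans; eauto.
Qed.

Lemma crt_none (F I : Type) (Ji : I -> justification F) ri p q :
  clos_refl_trans _ (@cedge F I Ji ri) p q -> q = None -> p = None.
Proof.
  induction 1; intros; subst; auto.
  exfalso; apply (cedge_none_r H).
Qed.

Lemma t_rt_t (A : Type) (r : A -> A -> Prop) a b c :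
  clos_trans _ r a b -> clos_refl_trans _ r b c -> clos_trans _ r a c.
Proof.
  intros H1 H2. revert a H1. induction H2; intros; auto.
  - eapply t_trans; eauto. constructor; auto.
Qed.

Lemma construction_ok (F I : Type) (Fd : F -> Prop) (R : F -> (F -> Prop) -> Prop)
  (Ji : I -> justification F) (yi : I -> F) (ri : forall i, jnode (Ji i))
  (x : F) (A : F -> Prop)
  (HJ : forall i, is_justification Fd R (Ji i))
  (HLC : forall i, locally_complete Fd (Ji i))
  (Hr : forall i, is_root (Ji i) (yi i) (ri i))
  (Hx : Fd x) (HA : R x A)
  (Hcov : forall a, A a <-> exists i, yi i = a)
  (Hne : exists i : I, True) :
  is_justification Fd R (cJ Ji x ri) /\ locally_complete Fd (cJ Ji x ri) /\
  rooted_in (cJ Ji x ri) x.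
Proof.
  split; [|split].
  - split; [|split].
    + simpl. intros m n1 n2 H1 H2.
      destruct n1 as [[i1 k1]|]; destruct n2 as [[i2 k2]|].
      * apply cedge_some in H1. apply cedge_some in H2.
        destruct H1 as [m1 [Hm1 E1]]. destruct H2 as [m2 [Hm2 E2]].
        subst m.
        assert (i2 = i1) by (first [exact (some_fst Hm2) | exact (eq_sym (some_fst Hm2))]).
        subst i2. apply some_inj in Hm2. subst m2.
        destruct (HJ i1) as [Hin _].
        rewrite (Hin m1 k1 k2 E1 E2). reflexivity.
      * apply cedge_some in H1. destruct H1 as [m1 [Hm1 E1]].
        destruct H2 as [[_ [i Hm]]|[i [n [m' [Hn _]]]]]; [|discriminate].
        rewrite Hm1 in Hm.
        assert (i = i1) by (first [exact (some_fst Hm) | exact (eq_sym (some_fst Hm))]).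
        subst i. apply some_inj in Hm. subst.
        destruct (Hr i1) as [_ Hreach].
        exfalso. destruct (HJ i1) as [_ [Hac _]].
        (* k1 -> ri i1, and ri i1 reaches k1: cycle *)
        apply (Hac k1).
        apply t_rt_t with (ri i1). constructor; auto. apply Hreach.
      * apply cedge_some in H2. destruct H2 as [m1 [Hm1 E1]].
        destruct H1 as [[_ [i Hm]]|[i [n [m' [Hn _]]]]]; [|discriminate].
        rewrite Hm1 in Hm.
        assert (i = i2) by (first [exact (some_fst Hm) | exact (eq_sym (some_fst Hm))]).
        subst i. apply some_inj in Hm. subst.
        destruct (Hr i2) as [_ Hreach].
        exfalso. destruct (HJ i2) as [_ [Hac _]].
        apply (Hac k2).
        apply t_rt_t with (ri i2). constructor; auto. apply Hreach.
      * reflexivity.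
    + simpl. intros n Hc. destruct (ctrans Hc) as [Hnn Hs].
      destruct n as [[i k]|]; [|apply Hnn; reflexivity].
      destruct (Hs i k eq_refl) as [m [Hm Hkm]].
      apply some_inj in Hm. subst m. destruct (HJ i) as [_ [Hac _]]. exact (Hac k Hkm).
    + simpl. intros n [m Hm]. destruct n as [[i k]|].
      * apply cedge_some in Hm. destruct Hm as [m0 [_ Hm0]].
        destruct (HJ i) as [_ [_ Hrule]].
        destruct (Hrule k (ex_intro _ m0 Hm0)) as [HFd HR].
        split; [exact HFd|].
        replace (fun b => exists m1, cedge ri (Some (existT _ i k)) m1 /\ clab Ji x m1 = b)
          with (fun b => exists m1, jedge (Ji i) k m1 /\ jlab (Ji i) m1 = b); [exact HR|].
        apply functional_extensionality; intro b. apply propositional_extensionality.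
        split.
        -- intros [m1 [E L]]. exists (Some (existT _ i m1)). split; auto.
           apply cedge_some. eauto.
        -- intros [m1 [E L]]. apply cedge_some in E. destruct E as [m2 [-> E]].
           exists m2; auto.
      * split; [exact Hx|].
        replace (fun b => exists m1, cedge ri None m1 /\ clab Ji x m1 = b) with A; [exact HA|].
        apply functional_extensionality; intro b. apply propositional_extensionality.
        split.
        -- intro Hb. apply Hcov in Hb. destruct Hb as [i Hi].
           exists (Some (existT _ i (ri i))). split.
           ++ left. split; eauto.
           ++ simpl. destruct (Hr i) as [Hl _]. rewrite Hl; auto.
        -- intros [m1 [E L]].
           destruct E as [[_ [i ->]]|[i [n [m' [Hn _]]]]]; [|discriminate].
           apply Hcov. exists i. simpl in L. destruct (Hr i) as [Hl _]. rewrite <- Hl; auto.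
  - simpl. intros n Hleaf. destruct n as [[i k]|].
    + simpl. apply (HLC i). intros [m Hm]. apply Hleaf.
      exists (Some (existT _ i m)). apply cedge_some. eauto.
    + exfalso. destruct Hne as [i _]. apply Hleaf.
      exists (Some (existT _ i (ri i))). left. split; eauto.
  - exists None. split; [reflexivity|].
    simpl. intros n. destruct n as [[i k]|]; [|apply rt_refl].
    eapply rt_trans.
    + apply rt_step. left. split; [reflexivity|]. exists i. reflexivity.
    + apply crt_lift. destruct (Hr i) as [_ H]. apply H.
Qed.

Lemma branch_extract (F I : Type) (Ji : I -> justification F) (yi : I -> F)
  (ri : forall i, jnode (Ji i)) (x : F)
  (Hr : forall i, is_root (Ji i) (yi i) (ri i))
  (Hne : exists i : I, True) (b : branch F) :
  is_J_branch (cJ Ji x ri) x b ->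
  exists i c, branch_eq b (bcons x c) /\ bhead c = yi i /\ is_J_branch (Ji i) (yi i) c.
Proof.
  intros [r [[Hrl Hreach] Hb]].
  assert (Hr0 : r = None) by (apply (crt_none (Hreach None)); reflexivity).
  subst r. simpl in *.
  destruct b as [s|l z].
  - destruct Hb as [p [Hp0 [Hpe Hps]]].
    assert (E0 := Hpe 0). rewrite Hp0 in E0.
    destruct E0 as [[_ [i Hp1]]|[i [n [m [Hn _]]]]]; [|discriminate].
    assert (Hq : forall k, exists n, p (S k) = Some (existT _ i n)).
    { induction k as [|k [n IH]]; [eauto|].
      assert (E := Hpe (S k)). rewrite IH in E. apply cedge_some in E.
      destruct E as [m [Hm _]]. eauto. }
    set (q := fun k => proj1_sig (constructive_indefinite_description _ (Hq k))).
    assert (Hqk : forall k, p (S k) = Some (existT _ i (q k))).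
    { intro k. unfold q. destruct (constructive_indefinite_description _ (Hq k)); auto. }
    exists i, (binf (fun k => s (S k))). split; [|split].
    + simpl. intros [|k]; auto. rewrite Hps, Hp0. reflexivity.
    + simpl. rewrite Hps, Hp1. simpl. apply (Hr i).
    + exists (ri i). split; [apply Hr|].
      exists q. split; [|split].
      * assert (H := Hqk 0). rewrite Hp1 in H. symmetry. exact (some_inj H).
      * intro k. assert (E := Hpe (S k)). rewrite Hqk, Hqk in E.
        apply cedge_some in E. destruct E as [m [Hm E]].
        apply some_inj in Hm. rewrite Hm. exact E.
      * intro k. rewrite Hps, Hqk. reflexivity.
  - destruct Hb as [p [Hp0 [Hpe [Hleaf [Hnth Hz]]]]].
    destruct l as [|a l'].
    { exfalso. destruct Hne as [i _]. simpl in Hleaf. rewrite Hp0 in Hleaf.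
      apply Hleaf. exists (Some (existT _ i (ri i))). left. split; eauto. }
    assert (Ha := Hnth 0 ltac:(simpl; lia)). rewrite Hp0 in Ha. simpl in Ha.
    injection Ha as Ha. subst a.
    assert (E0 := Hpe 0 ltac:(simpl; lia)). rewrite Hp0 in E0.
    destruct E0 as [[_ [i Hp1]]|[i [n [m [Hn _]]]]]; [|discriminate].
    assert (Hq : forall k, exists n, k <= length l' -> p (S k) = Some (existT _ i n)).
    { induction k as [|k [n IH]]; [eauto|].
      destruct (le_lt_dec (S k) (length l')) as [Hle|Hlt].
      - assert (E := Hpe (S k) ltac:(simpl; lia)). rewrite IH in E by lia.
        apply cedge_some in E. destruct E as [m [Hm _]]. eauto.
      - exists (ri i). intro; lia. }
    set (q := fun k => proj1_sig (constructive_indefinite_description _ (Hq k))).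
    assert (Hqk : forall k, k <= length l' -> p (S k) = Some (existT _ i (q k))).
    { intro k. unfold q. destruct (constructive_indefinite_description _ (Hq k)); auto. }
    assert (Hhead : bhead (bfin l' z) = yi i).
    { destruct l' as [|a' l''].
      - simpl. simpl in Hz. rewrite Hz, Hp1. apply (Hr i).
      - simpl. assert (H := Hnth 1 ltac:(simpl; lia)). simpl in H.
        rewrite Hp1 in H. injection H as H. rewrite H. apply (Hr i). }
    exists i, (bfin l' z). split; [|split]; auto.
    + simpl. auto.
    + exists (ri i). split; [apply Hr|].
      exists q. split; [|split; [|split; [|split]]].
      * assert (H := Hqk 0 ltac:(lia)). rewrite Hp1 in H. symmetry. exact (some_inj H).
      * intros k Hk. assert (E := Hpe (S k) ltac:(simpl; lia)).
        rewrite (Hqk k) in E by lia. rewrite (Hqk (S k)) in E by lia.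
        apply cedge_some in E. destruct E as [m [Hm E]].
        apply some_inj in Hm. rewrite Hm. exact E.
      * intros [m Hm]. apply Hleaf. simpl. rewrite (Hqk (length l')) by lia.
        exists (Some (existT _ i m)). apply cedge_some. eauto.
      * intros k Hk. assert (H := Hnth (S k) ltac:(simpl; lia)). simpl in H.
        rewrite H, (Hqk k) by lia. reflexivity.
      * rewrite Hz. simpl. rewrite (Hqk (length l')) by lia. reflexivity.
Qed.

Lemma first_conj (F : Type) (Fd : F -> Prop) (BB : branch F -> Prop) (x y : F)
  (H : forall b, BB b -> starts_in Fd b x) :
  forall c, sub_selection BB x y c -> starts_in Fd c y.
Proof.
  intros c [Hh [b [Hb Heq]]]. split; auto.
  destruct (H b Hb) as [Hbr _].
  destruct c as [s|l z]; destruct b as [s'|l0 z0]; simpl in *; try contradiction.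
  - intro k. rewrite <- (Heq (S k)). apply Hbr.
  - destruct Heq as [-> ->]. destruct Hbr as [Hf Hz]. inversion Hf; auto.
Qed.

Theorem mainTheorem4 (F : Type) (neg : F -> F) (t f u : F)
    (Fd : F -> Prop) (R : F -> (F -> Prop) -> Prop)
    (Hframe : is_justification_frame neg t f u Fd R)
    (Hcomp : complementary neg Fd R)
    (x : F) (Hx : Fd x) (BB : branch F -> Prop)
    (HBB : branch_selection Fd R x BB) :
  exists Bnx : F -> Prop, R (neg x) Bnx /\
    forall y, neg_set neg Bnx y ->
      branch_selection Fd R y (sub_selection BB x y).
Proof.
  destruct Hframe as [Hfs [HFdneg [_ [_ [_ [HRFd [Hex Hne]]]]]]].
  destruct Hfs as [_ [_ [_ [Hnn _]]]].
  apply NNPP; intro Hneg.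
  assert (Hbad : forall B, R (neg x) B -> exists y, neg_set neg B y /\
    exists J r, is_justification Fd R J /\ locally_complete Fd J /\ is_root J y r /\
      forall c, sub_selection BB x y c -> ~ is_J_branch J y c).
  { intros B HB. apply NNPP; intro H1. apply Hneg. exists B. split; auto.
    intros y Hy. split.
    - apply first_conj. apply HBB.
    - intros J HJ HLC [r Hr]. apply NNPP; intro H2. apply H1. exists y. split; auto.
      exists J, r. split; [|split; [|split]]; auto.
      intros c Hc Hjb. apply H2. exists c; auto. }
  set (dJ := {| jnode := unit; jedge := fun _ _ => False; jlab := fun _ => x |}).
  assert (Hch : forall B, exists p : F * {J : justification F & jnode J},
    R (neg x) B -> neg_set neg B (fst p) /\
      is_justification Fd R (projT1 (snd p)) /\ locally_complete Fd (projT1 (snd p)) /\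
      is_root (projT1 (snd p)) (fst p) (projT2 (snd p)) /\
      forall c, sub_selection BB x (fst p) c -> ~ is_J_branch (projT1 (snd p)) (fst p) c).
  { intro B. destruct (classic (R (neg x) B)) as [HB|HB].
    - destruct (Hbad B HB) as [y [Hy [J [r H]]]]. exists (y, existT _ J r). simpl; auto.
    - exists (x, existT _ dJ tt). intro; contradiction. }
  set (g := fun B => proj1_sig (constructive_indefinite_description _ (Hch B))).
  assert (Hg : forall B, R (neg x) B -> neg_set neg B (fst (g B)) /\
      is_justification Fd R (projT1 (snd (g B))) /\ locally_complete Fd (projT1 (snd (g B))) /\
      is_root (projT1 (snd (g B))) (fst (g B)) (projT2 (snd (g B))) /\
      forall c, sub_selection BB x (fst (g B)) c -> ~ is_J_branch (projT1 (snd (g B))) (fst (g B)) c).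
  { intro B. unfold g. destruct (constructive_indefinite_description _ (Hch B)); auto. }
  set (yf := fun B => fst (g B)).
  set (S := fun B => neg (yf B)).
  assert (HS : selection_function R (neg x) S).
  { intros B HB. destruct (Hg B HB) as [[a [Ha Hya]] _]. unfold S, yf. rewrite Hya, Hnn. exact Ha. }
  assert (Hnx : Fd (neg x)) by (apply (proj1 (HFdneg x)); exact Hx).
  destruct (proj1 (Hcomp (neg x) Hnx) S HS) as [A [HA HAsub]].
  rewrite Hnn in HA.
  assert (HAc : forall a, A a -> exists B, R (neg x) B /\ yf B = a).
  { intros a Ha. destruct (HAsub a Ha) as [a' [[B [HB HSB]] ->]].
    exists B. split; auto. rewrite <- HSB. unfold S. rewrite Hnn. reflexivity. }
  set (I := {B : F -> Prop | R (neg x) B /\ A (yf B)}).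
  set (Ji := fun i : I => projT1 (snd (g (proj1_sig i)))).
  set (yi := fun i : I => yf (proj1_sig i)).
  set (ri := fun i : I => projT2 (snd (g (proj1_sig i))) : jnode (Ji i)).
  assert (Hcov : forall a, A a <-> exists i, yi i = a).
  { intro a. split.
    - intro Ha. destruct (HAc a Ha) as [B [HB HyB]].
      assert (HAB : A (yf B)) by (rewrite HyB; exact Ha).
      exists (exist _ B (conj HB HAB)). exact HyB.
    - intros [[B [HB HAB]] Hy]. simpl in Hy. unfold yi in Hy. simpl in Hy. rewrite <- Hy. exact HAB. }
  assert (HneI : exists i : I, True).
  { destruct (Hne x A Hx HA) as [a Ha]. apply Hcov in Ha. destruct Ha as [i _]. eauto. }
  assert (Hr : forall i, is_root (Ji i) (yi i) (ri i)).
  { intros [B [HB HAB]]. apply (Hg B HB). }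
  destruct (@construction_ok F I Fd R Ji yi ri x A)
    as [HJ [HLC Hroot]]; auto.
  { intros [B [HB HAB]]. apply (Hg B HB). }
  { intros [B [HB HAB]]. apply (Hg B HB). }
  destruct (proj2 HBB _ HJ HLC Hroot) as [b [Hb HJb]].
  destruct (@branch_extract F I Ji yi ri x Hr HneI b HJb) as [i [c [Heq [Hhead Hjc]]]].
  destruct i as [B [HB HAB]].
  destruct (Hg B HB) as [_ [_ [_ [_ Hno]]]].
  apply (Hno c).
  - split; [exact Hhead|]. exists b. auto.
  - exact Hjc.
Qed.
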